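(* Let $G$ be a discrete group and let $X$ be a minimal, essentially free $G$-flow. Then $\tilde S_G(X)$ is a free $G$-flow. Moreover, if $G$ is countable, then $\tilde S_G(X)$ admits a metrizable factor which is also free.
   Context: A $G$-flow is essentially free if for every $g\neq e$ the set of points fixed by $g$ has empty interior, and free if every point has trivial stabilizer. For a minimal $G$-flow $X$ ($G$ discrete), $\tilde S_G(X)$ denotes the Stone space of the Boolean algebra of regular open subsets of $X$, with the induced $G$-action; the map $\pi_X\colon\tilde S_G(X)\to X$ sends an ultrafilter $p$ to the unique $x\in X$ all of whose regular open neighborhoods belong to $p$. ($\tilde S_G(X)$ is the universal highly proximal extension of $X$.) A factor of a flow $Y$ is a flow $Z$ with a continuous surjective $G$-map $Y\to Z$. *)

(* Defs.v *)
From Stdlib Require Import Reals List.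
Open Scope R_scope.

Set Implicit Arguments.

Definition is_group (G : Type) (mul : G -> G -> G) (inv : G -> G) (e : G) : Prop :=
  (forall a b c, mul a (mul b c) = mul (mul a b) c) /\
  (forall a, mul e a = a) /\ (forall a, mul a e = a) /\
  (forall a, mul (inv a) a = e) /\ (forall a, mul a (inv a) = e).

Definition countable_type (G : Type) : Prop :=
  exists f : nat -> G, forall g, exists n, f n = g.

Section Topology.
Variable T : Type.
Variable op : (T -> Prop) -> Prop.

Definition is_topology : Prop :=
  op (fun _ => True) /\ op (fun _ => False) /\
  (forall U V, op U -> op V -> op (fun x => U x /\ V x)) /\
  (forall F : (T -> Prop) -> Prop, (forall U, F U -> op U) ->
      op (fun x => exists U, F U /\ U x)).

Definition compact : Prop :=
  forall F : (T -> Prop) -> Prop,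
    (forall U, F U -> op U) -> (forall x, exists U, F U /\ U x) ->
    exists l : list (T -> Prop),
      (forall U, In U l -> F U) /\ (forall x, exists U, In U l /\ U x).

Definition hausdorff : Prop :=
  forall x y, x <> y -> exists U V, op U /\ op V /\ U x /\ V y /\
    (forall z, ~ (U z /\ V z)).

Definition interior (A : T -> Prop) (x : T) : Prop :=
  exists U, op U /\ U x /\ (forall y, U y -> A y).

Definition closure (A : T -> Prop) (x : T) : Prop :=
  forall U, op U -> U x -> exists y, U y /\ A y.

Definition regular_open (U : T -> Prop) : Prop :=
  op U /\ (forall x, interior (closure U) x <-> U x).

(* Boolean complement in the algebra of regular open sets: int (X \ U) *)
Definition ro_compl (U : T -> Prop) : T -> Prop := interior (fun x => ~ U x).

(* p is an ultrafilter of the Boolean algebra RO(T) of regular open sets.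
   Elements of RO(T) are sets up to extensional equality, hence the
   extensionality clause. *)
Definition ro_ultrafilter (p : (T -> Prop) -> Prop) : Prop :=
  (forall U, p U -> regular_open U) /\
  (forall U V, p U -> (forall x, U x <-> V x) -> p V) /\
  p (fun _ => True) /\
  ~ p (fun _ => False) /\
  (forall U V, p U -> p V -> p (fun x => U x /\ V x)) /\
  (forall U V, p U -> regular_open V -> (forall x, U x -> V x) -> p V) /\
  (forall U, regular_open U -> p U \/ p (ro_compl U)).

End Topology.

Definition continuous (A B : Type) (opA : (A -> Prop) -> Prop)
  (opB : (B -> Prop) -> Prop) (f : A -> B) : Prop :=
  forall V, opB V -> opA (fun a => V (f a)).

Section Flows.
Variables (G : Type) (mul : G -> G -> G) (inv : G -> G) (e : G).

(* X is a G-flow: compact Hausdorff space with a continuous action of the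
   discrete group G (i.e. each act g is continuous). *)
Definition is_flow (X : Type) (op : (X -> Prop) -> Prop) (act : G -> X -> X) : Prop :=
  is_topology op /\ compact op /\ hausdorff op /\
  (forall g, continuous op op (act g)) /\
  (forall x, act e x = x) /\
  (forall g h x, act (mul g h) x = act g (act h x)).

Definition minimal_flow (X : Type) (op : (X -> Prop) -> Prop) (act : G -> X -> X) : Prop :=
  forall x U, op U -> (exists y, U y) -> exists g, U (act g x).

Definition free_flow (X : Type) (act : G -> X -> X) : Prop :=
  forall g x, act g x = x -> g = e.

Definition essentially_free (X : Type) (op : (X -> Prop) -> Prop) (act : G -> X -> X) : Prop :=
  forall g, g <> e -> forall x, ~ interior op (fun y => act g y = y) x.

Variables (X : Type) (op : (X -> Prop) -> Prop) (act : G -> X -> X).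

Definition SG : Type := { p : (X -> Prop) -> Prop | ro_ultrafilter op p }.

(* Stone topology: basic open sets N_U = {p | U in p}, U regular open *)
Definition SG_open (V : SG -> Prop) : Prop :=
  forall p, V p -> exists U, regular_open op U /\ proj1_sig p U /\
    (forall q : SG, proj1_sig q U -> V q).

(* Induced action: g.p = {g U | U in p}; so U in g.p iff g^{-1} U in p.
   SG_act_rel g p q  means  q = g.p . *)
Definition SG_act_rel (g : G) (p q : SG) : Prop :=
  forall U, proj1_sig q U <-> proj1_sig p (fun x => U (act g x)).

Definition SG_free : Prop :=
  forall g (p : SG), SG_act_rel g p p -> g = e.

End Flows.

Definition is_metric (Z : Type) (d : Z -> Z -> R) : Prop :=
  (forall x y, 0 <= d x y) /\ (forall x y, d x y = 0 <-> x = y) /\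
  (forall x y, d x y = d y x) /\ (forall x y z, d x z <= d x y + d y z).

Definition metric_induces (Z : Type) (d : Z -> Z -> R) (opZ : (Z -> Prop) -> Prop) : Prop :=
  forall V, opZ V <-> (forall z, V z -> exists eps, 0 < eps /\
                          forall w, d z w < eps -> V w).

Definition metrizable (Z : Type) (opZ : (Z -> Prop) -> Prop) : Prop :=
  exists d : Z -> Z -> R, is_metric d /\ metric_induces d opZ.

Definition SG_factor (G : Type) (mul : G -> G -> G) (inv : G -> G) (e : G)
  (X : Type) (op : (X -> Prop) -> Prop) (act : G -> X -> X)
  (Z : Type) (opZ : (Z -> Prop) -> Prop) (actZ : G -> Z -> Z) : Prop :=
  is_flow mul e opZ actZ /\
  exists pi : SG op -> Z,
    continuous (SG_open (op:=op)) opZ pi /\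
    (forall z, exists p, pi p = z) /\
    (forall g p q, SG_act_rel act g p q -> pi q = actZ g (pi p)).

(* Main.v *)
Require Import Defs.
From Stdlib Require Import Reals List.

From Stdlib Require Import Reals Lra Lia List Classical ClassicalEpsilon FunctionalExtensionality PropExtensionality ProofIrrelevance Cantor.
Require Import Defs.


Definition sub {T} (A B : T -> Prop) := forall x, A x -> B x.

Lemma set_ext {T} (A B : T -> Prop) : (forall x, A x <-> B x) -> A = B.
Proof.
  intro H; apply functional_extensionality; intro x;
  apply propositional_extensionality; apply H.
Qed.

Section Zorn.
Variable T : Type.
Variable P : (T -> Prop) -> Prop.

Definition chain (C : (T -> Prop) -> Prop) :=
  forall x y, C x -> C y -> sub x y \/ sub y x.
Definition union (C : (T -> Prop) -> Prop) : T -> Prop :=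
  fun t => exists x, C x /\ x t.

Definition succ (x : T -> Prop) : T -> Prop :=
  match excluded_middle_informative
     (exists y, P y /\ sub x y /\ ~ sub y x) with
  | left H => proj1_sig (constructive_indefinite_description _ H)
  | right _ => x
  end.

Lemma succ_spec x : (P x -> P (succ x)) /\ sub x (succ x) /\
   ((exists y, P y /\ sub x y /\ ~ sub y x) -> ~ sub (succ x) x).
Proof.
  unfold succ; destruct excluded_middle_informative as [H|H].
  - destruct (constructive_indefinite_description _ H) as [y [Py [H1 H2]]]; simpl.
    repeat split; auto.
  - repeat split; auto. intros x0 h; exact h.
Qed.

Variable f0 : T -> Prop.
Definition sup (C : (T -> Prop) -> Prop) : T -> Prop :=
  fun t => f0 t \/ union C t.

Definition tower (Q : (T -> Prop) -> Prop) :=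
  Q f0 /\ (forall x, Q x -> Q (succ x)) /\
  (forall C, (forall x, C x -> Q x) -> chain C -> Q (sup C)).

Definition M (x : T -> Prop) := forall Q, tower Q -> Q x.

Lemma M_tower : tower M.
Proof.
  split; [|split].
  - intros Q HQ; apply HQ.
  - intros x Hx Q HQ; apply HQ, Hx, HQ.
  - intros C HC Hch Q HQ. apply HQ; auto. intros x Cx; apply HC; auto.
Qed.

Lemma M_ind (R : (T -> Prop) -> Prop) :
  tower (fun x => M x /\ R x) -> forall x, M x -> R x.
Proof. intros Ht x Mx. apply (Mx _ Ht). Qed.

Lemma M_f0 : forall x, M x -> sub f0 x.
Proof.
  apply M_ind. split; [|split].
  - split; [apply M_tower| intros t h; exact h].
  - intros x [Mx Hx]; split; [apply M_tower; auto|].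
    intros t h; apply (proj1 (proj2 (succ_spec x))); auto.
  - intros C HC Hch; split.
    + apply M_tower; auto. intros x Cx; apply HC; auto.
    + intros t h; left; exact h.
Qed.

Definition extreme c := forall x, M x -> sub x c -> ~ sub c x -> sub (succ x) c.

Lemma lemma1 c : M c -> extreme c -> forall x, M x -> sub x c \/ sub (succ c) x.
Proof.
  intros Mc Ec. apply M_ind. split; [|split].
  - split; [apply M_tower|]. left; apply M_f0; auto.
  - intros x [Mx [H|H]]; (split; [apply M_tower; auto|]).
    + destruct (classic (sub c x)) as [H'|H'].
      * right. assert (x = c) by (apply set_ext; split; auto). subst.
        intros t h; exact h.
      * left. apply Ec; auto.
    + right. intros t h. apply (proj1 (proj2 (succ_spec x))); auto.
  - intros C HC Hch. split. apply M_tower; auto. intros x Cx; apply HC; auto.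
    destruct (classic (exists x, C x /\ sub (succ c) x)) as [[x [Cx Hx]]|H].
    + right. intros t h. right. exists x; auto.
    + left. intros t [h|[x [Cx hx]]].
      * apply M_f0; auto.
      * destruct (proj2 (HC x Cx)) as [h'|h']. apply h'; auto.
        exfalso; apply H; eauto.
Qed.

Lemma all_extreme : forall c, M c -> extreme c.
Proof.
  apply M_ind. split; [|split].
  - split; [apply M_tower|]. intros x Mx H1 H2. exfalso. apply H2, M_f0; auto.
  - intros c [Mc Ec]; split; [apply M_tower; auto|].
    intros x Mx H1 H2.
    destruct (lemma1 c Mc Ec x Mx) as [h|h]; [|contradiction].
    destruct (classic (sub c x)) as [h'|h'].
    + assert (x = c) by (apply set_ext; split; auto). subst.
      intros t q; exact q.
    + intros t q. apply (proj1 (proj2 (succ_spec c))). apply (Ec x Mx h h'); auto.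
  - intros C HC Hch; split. apply M_tower; auto. intros x Cx; apply HC; auto.
    intros x Mx H1 H2.
    assert (exists z, C z /\ ~ sub z x) as [z [Cz Hz]].
    { apply NNPP; intro N. apply H2. intros t [h|[z [Cz hz]]].
      - apply M_f0; auto.
      - apply NNPP; intro N2. apply N; exists z; split; [exact Cz|].
        intro I; apply N2, I, hz. }
    destruct (HC z Cz) as [Mz Ez].
    destruct (lemma1 z Mz Ez x Mx) as [h|h].
    + intros t q. right. exists z. split; auto. apply (Ez x Mx); auto.
    + exfalso. apply Hz. intros t q. apply h. apply (proj1 (proj2 (succ_spec z))); auto.
Qed.

Lemma M_chain : chain M.
Proof.
  intros x y Mx My. destruct (lemma1 y My (all_extreme y My) x Mx) as [h|h]; auto.
  right. intros t q. apply h. apply (proj1 (proj2 (succ_spec y))); auto.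
Qed.

Hypothesis Pf0 : P f0.
Hypothesis Pchain : forall C, (forall x, C x -> P x) -> chain C -> (exists x, C x) -> P (union C).

Lemma M_P : forall x, M x -> P x.
Proof.
  apply M_ind. split; [|split].
  - split; [apply M_tower|auto].
  - intros x [Mx Px]; split; [apply M_tower; auto|]. apply succ_spec; auto.
  - intros C HC Hch; split. apply M_tower; auto. intros x Cx; apply HC; auto.
    destruct (classic (exists x, C x)) as [[x Cx]|N].
    + assert (sup C = union C) as ->.
      { apply set_ext; intro t; split.
        - intros [h|h]; auto. exists x; split; auto. apply M_f0; auto. apply HC; auto.
        - intro h; right; auto. }
      apply Pchain; auto. intros y Cy; apply HC; auto. exists x; auto.
    + assert (sup C = f0) as ->; auto.
      apply set_ext; intro t; split.
      * intros [h|[y [Cy _]]]; auto. exfalso; eauto.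
      * intro h; left; auto.
Qed.

Theorem zorn : exists m, P m /\ sub f0 m /\ forall y, P y -> sub m y -> sub y m.
Proof.
  pose (m := sup M).
  assert (Mm : M m) by (apply (proj2 (proj2 M_tower)); [intros x h; exact h | apply M_chain]).
  exists m; split; [apply M_P; auto|split].
  - intros t h; left; exact h.
  - intros y Py Hy. apply NNPP; intro N.
    apply (proj2 (proj2 (succ_spec m))). exists y; auto.
    intros t h. right. exists (succ m). split; auto. apply (proj1 (proj2 M_tower)); exact Mm.
Qed.
End Zorn.


Section Top.
Variables (X : Type) (op : (X -> Prop) -> Prop) (Ht : is_topology op).

Lemma op_True : op (fun _ => True). Proof. apply Ht. Qed.
Lemma op_False : op (fun _ => False). Proof. apply Ht. Qed.
Lemma op_and U V : op U -> op V -> op (fun x => U x /\ V x).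
Proof. apply Ht. Qed.
Lemma op_local (A : X -> Prop) :
  (forall x, A x -> exists U, op U /\ U x /\ sub U A) -> op A.
Proof.
  intro H.
  assert (A = fun x => exists U, (op U /\ sub U A) /\ U x) as ->.
  { apply set_ext; intro x; split.
    - intro a; destruct (H x a) as [U [oU [Ux iU]]]; eauto.
    - intros [U [[_ iU] Ux]]; auto. }
  apply Ht. intros U [h _]; exact h.
Qed.

Lemma int_open A : op (interior op A).
Proof.
  apply op_local. intros x [U [oU [Ux iU]]]. exists U; repeat split; auto.
  intros y Uy. exists U; auto.
Qed.
Lemma int_sub A x : interior op A x -> A x.
Proof. intros [U [_ [Ux iU]]]; auto. Qed.
Lemma open_int A x : op A -> A x -> interior op A x.
Proof. intros oA Ax; exists A; auto. Qed.
Lemma int_mono A B : sub A B -> sub (interior op A) (interior op B).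
Proof. intros I x [U [oU [Ux iU]]]; exists U; repeat split; auto. Qed.
Lemma cl_mono A B : sub A B -> sub (closure op A) (closure op B).
Proof. intros I x Hx U oU Ux; destruct (Hx U oU Ux) as [y [Uy Ay]]; eauto. Qed.
Lemma sub_cl A x : A x -> closure op A x.
Proof. intros Ax U oU Ux; eauto. Qed.
Lemma cl_cl W U : sub W (closure op U) -> sub (closure op W) (closure op U).
Proof.
  intros I x Hx O oO Ox. destruct (Hx O oO Ox) as [y [Oy Wy]].
  apply (I y Wy O oO Oy).
Qed.

Definition ic (U : X -> Prop) := interior op (closure op U).

Lemma ic_RO U : regular_open op (ic U).
Proof.
  split. apply int_open. intro x; split.
  - apply int_mono. apply cl_cl. intros y h. apply int_sub; exact h.
  - intro h. apply (int_mono (ic U)). intros y hy; apply sub_cl; exact hy.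
    apply open_int; [apply int_open|exact h].
Qed.
Lemma open_ic U : op U -> sub U (ic U).
Proof.
  intros oU x Ux. exists U; repeat split; auto. intros y Uy; apply sub_cl; auto.
Qed.
Lemma RO_open U : regular_open op U -> op U.
Proof. intros [h _]; exact h. Qed.
Lemma RO_ic U : regular_open op U -> ic U = U.
Proof. intros [_ h]; apply set_ext; exact h. Qed.

Lemma compl_disj U x : ro_compl op U x -> U x -> False.
Proof. intros h Ux. apply (int_sub _ _ h Ux). Qed.
Lemma open_sub_compl U W : op W -> (forall x, W x -> U x -> False) -> sub W (ro_compl op U).
Proof. intros oW H x Wx. exists W; split; [exact oW|split; [exact Wx|]]. intros y Wy Uy; apply (H y); auto. Qed.

Lemma ro_compl_RO U : op U -> regular_open op (ro_compl op U).
Proof.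
  intro oU. split. apply int_open. intro x; split.
  - intros [O [oO [Ox iO]]].
    apply (open_sub_compl U O oO); auto.
    intros y Oy Uy.
    destruct (iO y Oy (fun z => O z /\ U z) (op_and _ _ oO oU) (conj Oy Uy)) as [z [[Oz Uz] cz]].
    apply (compl_disj U z cz Uz).
  - intro h. apply (int_mono (ro_compl op U)). intros y hy; apply sub_cl; exact hy.
    apply open_int; [apply int_open|exact h].
Qed.

Lemma RO_inter U V : regular_open op U -> regular_open op V ->
  regular_open op (fun x => U x /\ V x).
Proof.
  intros RU RV. split. apply op_and; apply RO_open; auto.
  intro x; split.
  - intro h; split.
    + rewrite <- (RO_ic U RU). revert h; apply int_mono, cl_mono; intros y [a b]; auto.
    + rewrite <- (RO_ic V RV). revert h; apply int_mono, cl_mono; intros y [a b]; auto.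
  - intro h. apply (int_mono (fun x => U x /\ V x)). intros y hy; apply sub_cl; exact hy.
    apply open_int; auto. apply op_and; apply RO_open; auto.
Qed.

Lemma RO_True : regular_open op (fun _ => True).
Proof. split. apply op_True. intro x; split; auto. intros _.
  apply (int_mono (fun _ => True)). intros y hy; apply sub_cl; exact hy.
  apply open_int; auto. apply op_True. Qed.
Lemma RO_False : regular_open op (fun _ => False).
Proof. split. apply op_False. intro x; split; [|intros []].
  intros h. destruct (int_sub _ _ h (fun _ => True) op_True I) as [y [_ []]]. Qed.

Lemma ic_mono A B : sub A B -> sub (ic A) (ic B).
Proof. intro I; apply int_mono, cl_mono, I. Qed.

Lemma open_disj_cl O A x : op O -> O x -> closure op A x -> (forall y, O y -> A y -> False) -> False.
Proof. intros oO Ox c H. destruct (c O oO Ox) as [y [Oy Ay]]; eauto. Qed.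

End Top.
Arguments ic {X} op U.


Section Flow.
Variables (G : Type) (mul : G -> G -> G) (inv : G -> G) (e : G).
Hypothesis HG : is_group mul inv e.
Variables (X : Type) (op : (X -> Prop) -> Prop) (act : G -> X -> X).
Hypothesis Hflow : is_flow mul e op act.

Lemma Ht : is_topology op. Proof. apply Hflow. Qed.
Lemma Hhaus : hausdorff op. Proof. apply Hflow. Qed.
Lemma Hcont g : continuous op op (act g). Proof. apply Hflow. Qed.
Lemma act_e x : act e x = x. Proof. apply Hflow. Qed.
Lemma act_mul g h x : act (mul g h) x = act g (act h x). Proof. apply Hflow. Qed.
Lemma act_inv_l g x : act (inv g) (act g x) = x.
Proof. rewrite <- act_mul. destruct HG as [_ [_ [_ [H _]]]]. rewrite H. apply act_e. Qed.
Lemma act_inv_r g x : act g (act (inv g) x) = x.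
Proof. rewrite <- act_mul. destruct HG as [_ [_ [_ [_ H]]]]. rewrite H. apply act_e. Qed.

Definition pre (h : G) (U : X -> Prop) : X -> Prop := fun x => U (act h x).

Lemma pre_open h U : op U -> op (pre h U).
Proof. intro o; apply (Hcont h U o). Qed.

Lemma pre_interior h A : pre h (interior op A) = interior op (pre h A).
Proof.
  apply set_ext; intro x; unfold pre; split.
  - intros [O [oO [Ox iO]]]. exists (pre h O); split; [apply pre_open; auto|split; [exact Ox|]].
    intros y hy; apply iO; exact hy.
  - intros [O [oO [Ox iO]]]. exists (pre (inv h) O); repeat split.
    + apply pre_open; auto.
    + unfold pre; rewrite act_inv_l; auto.
    + intros y hy. pose proof (iO _ hy) as q. unfold pre in q. rewrite act_inv_r in q. exact q.
Qed.

Lemma pre_closure h A : pre h (closure op A) = closure op (pre h A).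
Proof.
  apply set_ext; intro x; unfold pre; split.
  - intros c O oO Ox.
    destruct (c (pre (inv h) O)) as [y [Oy Ay]].
    + apply pre_open; auto.
    + unfold pre; rewrite act_inv_l; auto.
    + exists (act (inv h) y). split; auto. unfold pre; rewrite act_inv_r; auto.
  - intros c O oO Ox.
    destruct (c (pre h O) (pre_open h O oO) Ox) as [y [Oy Ay]].
    exists (act h y); auto.
Qed.

Lemma pre_ic h U : pre h (ic op U) = ic op (pre h U).
Proof. unfold ic. rewrite pre_interior, pre_closure. reflexivity. Qed.

Lemma pre_RO h U : regular_open op U -> regular_open op (pre h U).
Proof.
  intros RU. split. apply pre_open, RO_open; auto.
  intro x. change (ic op (pre h U) x <-> pre h U x). rewrite <- pre_ic.
  unfold pre. rewrite (RO_ic _ _ U RU). tauto.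
Qed.

Lemma pre_compl h U : pre h (ro_compl op U) = ro_compl op (pre h U).
Proof. unfold ro_compl. rewrite pre_interior. reflexivity. Qed.

Lemma pre_pre g h U : pre h (pre g U) = pre (mul g h) U.
Proof. apply set_ext; intro x; unfold pre; rewrite act_mul; tauto. Qed.

Lemma pre_e U : pre e U = U.
Proof. apply set_ext; intro x; unfold pre; rewrite act_e; tauto. Qed.

Lemma pre_inv g U : pre (inv g) (pre g U) = U.
Proof. apply set_ext; intro x; unfold pre; rewrite act_inv_r; tauto. Qed.
Lemma pre_inv' g U : pre g (pre (inv g) U) = U.
Proof. apply set_ext; intro x; unfold pre; rewrite act_inv_l; tauto. Qed.

Section UF.
Variable p : (X -> Prop) -> Prop.
Hypothesis Hp : ro_ultrafilter op p.
Lemma uf_RO U : p U -> regular_open op U. Proof. apply Hp. Qed.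
Lemma uf_True : p (fun _ => True). Proof. apply Hp. Qed.
Lemma uf_False : ~ p (fun _ => False). Proof. apply Hp. Qed.
Lemma uf_and U V : p U -> p V -> p (fun x => U x /\ V x). Proof. apply Hp. Qed.
Lemma uf_up U V : p U -> regular_open op V -> sub U V -> p V. Proof. apply Hp. Qed.
Lemma uf_ultra U : regular_open op U -> p U \/ p (ro_compl op U). Proof. apply Hp. Qed.
Lemma uf_empty U : p U -> (forall x, U x -> False) -> False.
Proof.
  intros pU H. apply uf_False. assert (U = fun _ => False) as <-; auto.
  apply set_ext; intro x; split; [apply H|intros []].
Qed.
Lemma uf_not_both U : p U -> p (ro_compl op U) -> False.
Proof.
  intros a b. apply (uf_empty _ (uf_and _ _ a b)). intros x [h1 h2].
  apply (compl_disj _ _ U x h2 h1).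
Qed.
Lemma uf_compl U : regular_open op U -> ~ p U -> p (ro_compl op U).
Proof. intros R n. destruct (uf_ultra U R); tauto. Qed.
End UF.

Hypothesis Hess : essentially_free e op act.

Section Wit.
Variable g : G.
Hypothesis Hg : g <> e.

Definition Dg (B : X -> Prop) := forall x, B x -> B (act g x) -> False.

Lemma shrink V x0 : op V -> V x0 ->
  exists V', op V' /\ (exists y, V' y) /\ sub V' V /\ Dg V'.
Proof.
  intros oV Vx0.
  assert (exists y, V y /\ act g y <> y) as [y [Vy Hy]].
  { apply NNPP; intro N. apply (Hess g Hg x0). exists V; repeat split; auto.
    intros y Vy. apply NNPP; intro N2. apply N; eauto. }
  destruct (Hhaus y (act g y)) as [A [B [oA [oB [Ay [By AB]]]]]]; auto.
  exists (fun x => V x /\ A x /\ pre g B x). repeat split.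
  - apply (op_and _ _ Ht); auto. apply (op_and _ _ Ht); auto. apply pre_open; auto.
  - exists y; repeat split; auto.
  - intros x [h _]; exact h.
  - intros x [_ [_ h1]] [_ [h2 _]]. apply (AB (act g x)); split; auto.
Qed.

Lemma Dg_ic B : op B -> Dg B -> Dg (ic op B).
Proof.
  intros oB DB x h1 h2.
  set (U := ic op B) in *.
  assert (oU : op U) by (apply (int_open _ _ Ht)).
  assert (cx : closure op B x) by (exact (int_sub X op _ _ h1)).
  destruct (cx (fun z => U z /\ pre g U z)) as [y [[Uy gUy] By]].
  { apply (op_and _ _ Ht); auto. apply pre_open; auto. }
  { split; auto. }
  assert (cgy : closure op B (act g y)) by (exact (int_sub X op _ _ gUy)).
  destruct (cgy (pre (inv g) B)) as [w [Qw Bw]].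
  { apply pre_open; auto. }
  { unfold pre; rewrite act_inv_l; auto. }
  apply (DB (act (inv g) w)); auto. rewrite act_inv_r; auto.
Qed.

Definition PD (A : X -> Prop) := op A /\ Dg A.

Lemma maxA : exists A, PD A /\ forall B, PD B -> sub A B -> sub B A.
Proof.
  destruct (zorn _ PD (fun _ => False)) as [A [PA [_ MA]]].
  - split. apply op_False, Ht. intros x [].
  - intros C HC Hch [x0 Cx0]. split.
    + apply Ht. intros U CU; apply HC; auto.
    + intros x [a [Ca ax]] [b [Cb bx]].
      destruct (Hch a b Ca Cb) as [I|I].
      * apply (proj2 (HC b Cb) x); auto.
      * apply (proj2 (HC a Ca) x); auto.
  - exists A; split; auto.
Qed.

Definition W3 (A : X -> Prop) := fun y => A y \/ A (act (inv g) y) \/ A (act g y).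

Lemma dense_W3 A : PD A -> (forall B, PD B -> sub A B -> sub B A) ->
  forall V x0, op V -> V x0 -> exists y, V y /\ W3 A y.
Proof.
  intros [oA DA] MA V x0 oV Vx0. apply NNPP; intro N.
  destruct (shrink V x0 oV Vx0) as [V' [oV' [[y V'y] [sV0 DV']]]].
  assert (sV' : forall z, V' z -> V z /\ ~ W3 A z).
  { intros z h. split; auto. intro Wz; apply N; exists z; split; auto. }
  assert (PD (fun x => A x \/ V' x)).
  { split. apply op_local. apply Ht. intros x [Ax|Vx].
    - exists A; split; [auto|split; [auto|]]. intros z h; left; auto.
    - exists V'; split; [auto|split; [auto|]]. intros z h; right; auto.
    - intros x [a|a] [b|b].
      + apply (DA x); auto.
      + destruct (sV' _ b) as [_ nW]. apply nW. right; left. rewrite act_inv_l; auto.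
      + destruct (sV' _ a) as [_ nW]. apply nW. right; right; auto.
      + apply (DV' x); auto. }
  assert (Ay : A y). { apply (MA _ H). intros z h; left; auto. right; auto. }
  destruct (sV' _ V'y) as [_ nW]. apply nW; left; auto.
Qed.

Lemma witness3 : exists c1 c2 c3 : X -> Prop,
  regular_open op c1 /\ regular_open op c2 /\ regular_open op c3 /\
  Dg c1 /\ Dg c2 /\ Dg c3 /\
  forall p, ro_ultrafilter op p -> p c1 \/ p c2 \/ p c3.
Proof.
  destruct maxA as [A [[oA DA] MA]].
  exists (ic op A), (ic op (pre (inv g) A)), (ic op (pre g A)).
  split; [apply (ic_RO _ _ Ht)|split; [apply (ic_RO _ _ Ht)|split; [apply (ic_RO _ _ Ht)|]]].
  split; [|split; [|split]].
  - apply Dg_ic; auto.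
  - apply Dg_ic. apply pre_open; auto.
    intros x h1 h2. unfold pre in *. rewrite act_inv_l in h2.
    apply (DA (act (inv g) x)); auto. rewrite act_inv_r; auto.
  - apply Dg_ic. apply pre_open; auto.
    intros x h1 h2. unfold pre in *. apply (DA (act g x)); auto.
  - intros p Hp.
    destruct (classic (p (ic op A))) as [h|h1]; [left; auto|].
    destruct (classic (p (ic op (pre (inv g) A)))) as [h|h2]; [right; left; auto|].
    destruct (classic (p (ic op (pre g A)))) as [h|h3]; [right; right; auto|].
    exfalso.
    apply uf_compl in h1; auto; [|apply (ic_RO _ _ Ht)].
    apply uf_compl in h2; auto; [|apply (ic_RO _ _ Ht)].
    apply uf_compl in h3; auto; [|apply (ic_RO _ _ Ht)].
    pose proof (uf_and _ Hp _ _ h1 (uf_and _ Hp _ _ h2 h3)) as hI.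
    apply (uf_empty _ Hp _ hI). intros x Ix.
    destruct (dense_W3 A (conj oA DA) MA (fun x => ro_compl op (ic op A) x /\ ro_compl op (ic op (pre (inv g) A)) x /\ ro_compl op (ic op (pre g A)) x) x) as [y [[i1 [i2 i3]] Wy]]; auto.
    { apply (op_and _ _ Ht); [apply (int_open _ _ Ht)|apply (op_and _ _ Ht); apply (int_open _ _ Ht)]. }
    destruct Wy as [a|[a|a]].
    + apply (compl_disj _ _ _ y i1). apply open_ic; auto.
    + apply (compl_disj _ _ _ y i2). apply open_ic; auto. apply pre_open; auto.
    + apply (compl_disj _ _ _ y i3). apply open_ic; auto. apply pre_open; auto.
Qed.
End Wit.

Lemma SG_free_thm : SG_free e op act.
Proof.
  intros g [p Hp] H. apply NNPP; intro Hg. simpl in H.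
  destruct (witness3 g Hg) as [c1 [c2 [c3 [_ [_ [_ [D1 [D2 [D3 Hc]]]]]]]]].
  assert (forall c, Dg g c -> p c -> False).
  { intros c Dc pc. assert (pc' : p (pre g c)) by (exact (proj1 (H c) pc)).
    apply (uf_empty _ Hp _ (uf_and _ Hp _ _ pc pc')). intros x [a b]. apply (Dc x); auto. }
  destruct (Hc p Hp) as [h|[h|h]]; eauto.
Qed.

End Flow.
Arguments pre {G X} act h U.


Section Comp.
Variables (X : Type) (op : (X -> Prop) -> Prop).
Hypothesis Ht : is_topology op.

Definition rofilter (p : (X -> Prop) -> Prop) :=
  (forall U, p U -> regular_open op U) /\ p (fun _ => True) /\ ~ p (fun _ => False) /\
  (forall U V, p U -> p V -> p (fun x => U x /\ V x)) /\
  (forall U V, p U -> regular_open op V -> sub U V -> p V).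

Lemma extend f0 : rofilter f0 -> exists q, ro_ultrafilter op q /\ sub f0 q.
Proof.
  intro Hf0.
  destruct (zorn _ rofilter f0) as [m [[R [T [F [A U]]]] [s0 Mx]]]; auto.
  - intros C HC Hch [x0 Cx0]. split; [|split; [|split; [|split]]].
    + intros V [x [Cx xV]]. apply (HC x Cx); auto.
    + exists x0; split; auto. apply (HC x0 Cx0).
    + intros [x [Cx xF]]. apply (HC x Cx); auto.
    + intros V W [x [Cx xV]] [y [Cy yW]].
      destruct (Hch x y Cx Cy) as [I|I].
      * exists y; split; auto. apply (HC y Cy); auto.
      * exists x; split; auto. apply (HC x Cx); auto.
    + intros V W [x [Cx xV]] RW sVW. exists x; split; auto. apply (HC x Cx) with V; auto.
  - exists m; split; auto.
    split; [auto|split; [|split; [auto|split; [auto|split; [auto|split; [auto|]]]]]].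
    + intros V W mV E. assert (V = W) as <- by (apply set_ext; auto). auto.
    + intros V RV. destruct (classic (m (ro_compl op V))) as [h|h]; [right; auto|left].
      pose (m' := fun W => regular_open op W /\ exists Z, m Z /\ forall x, Z x -> V x -> W x).
      assert (Rm' : rofilter m').
      { split; [|split; [|split; [|split]]].
        - intros W [h1 _]; auto.
        - split. apply RO_True; auto. exists (fun _ => True); split; auto.
        - intros [_ [Z [mZ HZ]]]. apply h. apply U with Z; auto.
          apply ro_compl_RO; auto. apply RO_open; auto.
          apply open_sub_compl. apply RO_open; auto. intros x a b; apply (HZ x); auto.
        - intros W1 W2 [r1 [Z1 [m1 H1]]] [r2 [Z2 [m2 H2]]]. split. apply RO_inter; auto.
          exists (fun x => Z1 x /\ Z2 x). split; auto. intros x [a b] c; split; auto.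
        - intros W1 W2 [r1 [Z1 [m1 H1]]] r2 s. split; auto. exists Z1; split; auto. }
      apply (Mx m' Rm').
      * intros W mW. split; auto. exists W; split; auto.
      * split; auto. exists (fun _ => True); split; auto.
Qed.

Lemma uf_join (q : (X -> Prop) -> Prop) U1 U2 : ro_ultrafilter op q ->
  regular_open op U1 -> regular_open op U2 ->
  q (ic op (fun x => U1 x \/ U2 x)) -> q U1 \/ q U2.
Proof.
  intros Hq R1 R2 qU. apply NNPP; intro N.
  assert (c1 : q (ro_compl op U1)) by (apply uf_compl; auto).
  assert (c2 : q (ro_compl op U2)) by (apply uf_compl; auto).
  apply (uf_empty _ _ q Hq _ (uf_and _ _ _ Hq _ _ qU (uf_and _ _ _ Hq _ _ c1 c2))).
  intros x [h [a b]].
  apply (open_disj_cl X op (fun y => ro_compl op U1 y /\ ro_compl op U2 y)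
     (fun y => U1 y \/ U2 y) x).
  - apply op_and; auto; apply (int_open X op Ht).
  - split; auto.
  - apply (int_sub X op); exact h.
  - intros y [a' b'] [u|u].
    + apply (compl_disj X op U1 y); auto.
    + apply (compl_disj X op U2 y); auto.
Qed.

Lemma SG_compact : compact (SG_open (op := op)).
Proof.
  intros F HF Hcov. apply NNPP; intro Nfin.
  pose (I := fun U => regular_open op U /\ exists l, (forall O, In O l -> F O) /\
            forall q : SG op, proj1_sig q U -> exists O, In O l /\ O q).
  pose (f0 := fun V => regular_open op V /\ exists U, I U /\ sub (ro_compl op U) V).
  assert (Rf0 : rofilter f0).
  { split; [|split; [|split; [|split]]].
    - intros V [h _]; auto.
    - split. apply RO_True; auto. exists (fun _ => False). split.
      + split. apply RO_False; auto. exists nil. split. intros O [].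
        intros [q Hq] h. exfalso. apply (uf_False X op q Hq h).
      + intros x _; auto.
    - intros [_ [U [[RU [l [lF lc]]] s]]]. apply Nfin. exists l; split; auto.
      intro q. apply lc. destruct q as [q Hq]; simpl.
      destruct (uf_ultra X op q Hq U RU) as [h|h]; auto.
      exfalso. apply (uf_empty X op q Hq _ h). intros x c; apply (s x c).
    - intros V1 V2 [r1 [U1 [[R1 [l1 [F1 C1]]] s1]]] [r2 [U2 [[R2 [l2 [F2 C2]]] s2]]].
      split. apply RO_inter; auto.
      exists (ic op (fun x => U1 x \/ U2 x)). split.
      + split. apply ic_RO; auto. exists (l1 ++ l2). split.
        * intros O h. apply in_app_or in h as [h|h]; auto.
        * intros [q Hq] h. simpl in h.
          destruct (uf_join q U1 U2 Hq R1 R2 h) as [a|a].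
          -- destruct (C1 (exist _ q Hq) a) as [O [iO Oq]]. exists O; split; auto.
             apply in_or_app; auto.
          -- destruct (C2 (exist _ q Hq) a) as [O [iO Oq]]. exists O; split; auto.
             apply in_or_app; auto.
      + intros x h. split.
        * apply s1. revert h. apply int_mono. intros y ny u1. apply ny.
          apply (ic_mono X op U1); [intros z hz; left; exact hz|].
          apply (open_ic X op); [apply RO_open; auto|exact u1].
        * apply s2. revert h. apply int_mono. intros y ny u2. apply ny.
          apply (ic_mono X op U2); [intros z hz; right; exact hz|].
          apply (open_ic X op); [apply RO_open; auto|exact u2].
    - intros V W [r [U [IU s]]] RW sVW. split; auto. exists U; split; auto.
      intros x h; auto. }
  destruct (extend f0 Rf0) as [q [Hq sq]].
  destruct (Hcov (exist _ q Hq)) as [O [FO Oq]].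
  destruct (HF O FO _ Oq) as [U [RU [qU HU]]]. simpl in qU.
  assert (f0 (ro_compl op U)).
  { split. apply ro_compl_RO; auto. apply RO_open; auto.
    exists U. split.
    - split; auto. exists (O :: nil). split.
      + intros O' [<-|[]]; auto.
      + intros q' h. exists O; split; [left; auto|]. apply HU; auto.
    - intros x h; auto. }
  apply (uf_not_both X op q Hq U); auto.
Qed.
End Comp.

Section Act.
Variables (G : Type) (mul : G -> G -> G) (inv : G -> G) (e : G).
Hypothesis HG : is_group mul inv e.
Variables (X : Type) (op : (X -> Prop) -> Prop) (act : G -> X -> X).
Hypothesis Hflow : is_flow mul e op act.

Lemma SG_act_uf (p : (X -> Prop) -> Prop) g : ro_ultrafilter op p ->
  ro_ultrafilter op (fun U => p (pre act g U)).
Proof.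
  intro Hp. split; [|split; [|split; [|split; [|split; [|split]]]]].
  - intros U h. rewrite <- (pre_inv _ mul inv e HG X op act Hflow g U).
    apply (pre_RO _ mul inv e HG X op act Hflow). apply (uf_RO X op p Hp); auto.
  - intros U V h E. assert (U = V) as <- by (apply set_ext; auto). auto.
  - apply (uf_True X op p Hp).
  - apply (uf_False X op p Hp).
  - intros U V a b. apply (uf_and X op p Hp _ _ a b).
  - intros U V a R s. apply (uf_up X op p Hp _ _ a).
    apply (pre_RO _ mul inv e HG X op act Hflow); auto.
    intros x h; apply s; auto.
  - intros U R. rewrite (pre_compl _ mul inv e HG X op act Hflow).
    apply (uf_ultra X op p Hp). apply (pre_RO _ mul inv e HG X op act Hflow); auto.
Qed.
End Act.

Open Scope R_scope.

Lemma least_ex (P : nat -> Prop) : (exists n, P n) -> exists n, P n /\ forall j, (j < n)%nat -> ~ P j.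
Proof.
  intros [n Pn]. revert Pn. induction n as [n IH] using (well_founded_induction Wf_nat.lt_wf).
  intro Pn. destruct (classic (exists j, (j < n)%nat /\ P j)) as [[j [jn Pj]]|N].
  - apply (IH j jn Pj).
  - exists n; split; auto. intros j jn Pj; apply N; eauto.
Qed.

Definition hf (k : nat) : R := (/2) ^ k.
Lemma hf_pos k : 0 < hf k. Proof. unfold hf; apply pow_lt; lra. Qed.
Lemma hf_S k : hf (S k) = / 2 * hf k. Proof. reflexivity. Qed.
Lemma hf_lt j k : (j < k)%nat -> hf k < hf j.
Proof.
  intro H. induction H.
  - rewrite hf_S. pose proof (hf_pos j); lra.
  - rewrite hf_S. pose proof (hf_pos m); lra.
Qed.
Lemma hf_le j k : (j <= k)%nat -> hf k <= hf j.
Proof. intro H. destruct (Nat.eq_dec j k) as [->|n]; [lra|]. apply Rlt_le, hf_lt; lia. Qed.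
Lemma hf_small eps : 0 < eps -> exists k, hf k < eps.
Proof.
  intro H. destruct (pow_lt_1_zero (/2)) with eps as [N HN]; auto.
  { rewrite Rabs_right; lra. }
  exists N. specialize (HN N (le_n N)). rewrite Rabs_right in HN; auto.
  apply Rle_ge, Rlt_le, hf_pos.
Qed.

Definition dist (z w : nat -> Prop) : R :=
  match excluded_middle_informative (exists n, ~ (z n <-> w n)) with
  | left H => hf (proj1_sig (constructive_indefinite_description _ (least_ex _ H)))
  | right _ => 0
  end.

Lemma dist_spec z w : ((forall n, z n <-> w n) /\ dist z w = 0) \/
  exists k, (forall j, (j < k)%nat -> (z j <-> w j)) /\ ~ (z k <-> w k) /\ dist z w = hf k.
Proof.
  unfold dist. destruct excluded_middle_informative as [H|H].
  - right. destruct (constructive_indefinite_description _ _) as [k [h1 h2]]; simpl.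
    exists k; split; [|split; [exact h1|reflexivity]].
    intros j jk. apply NNPP; intro N; apply (h2 j jk N).
  - left. split; auto. intro n. apply NNPP; intro N; apply H; eauto.
Qed.

Definition agree k (z w : nat -> Prop) := forall j, (j <= k)%nat -> (z j <-> w j).

Lemma dist_lt k z w : dist z w < hf k <-> agree k z w.
Proof.
  destruct (dist_spec z w) as [[A ->]|[k' [A [B ->]]]]; split.
  - intros _ j _; auto.
  - intros _; apply hf_pos.
  - intros H j jk. destruct (Compare_dec.le_lt_dec k' j) as [h|h]; [|apply A; auto].
    exfalso. assert (hf k <= hf k') by (apply hf_le; lia). lra.
  - intros H. apply hf_lt. destruct (Compare_dec.le_lt_dec k' k) as [h|h]; auto.
    exfalso; apply B, H; auto.
Qed.

Lemma dist_nonneg z w : 0 <= dist z w.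
Proof. destruct (dist_spec z w) as [[_ ->]|[k [_ [_ ->]]]]. lra. apply Rlt_le, hf_pos. Qed.

Lemma dist_zero z w : dist z w = 0 <-> forall n, z n <-> w n.
Proof.
  destruct (dist_spec z w) as [[A ->]|[k [A [B ->]]]]; split; auto.
  - intro h; pose proof (hf_pos k); lra.
  - intro h; exfalso; apply B, h.
Qed.

Lemma dist_sym z w : dist z w = dist w z.
Proof.
  apply Rle_antisym; apply Rnot_lt_le; intro H.
  - destruct (dist_spec z w) as [[A E]|[k [A [B E]]]].
    + rewrite E in H; pose proof (dist_nonneg w z); lra.
    + rewrite E in H. apply dist_lt in H. apply B. symmetry. apply H; auto.
  - destruct (dist_spec w z) as [[A E]|[k [A [B E]]]].
    + rewrite E in H; pose proof (dist_nonneg z w); lra.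
    + rewrite E in H. apply dist_lt in H. apply B. symmetry. apply H; auto.
Qed.

Lemma dist_tri x y z : dist x z <= dist x y + dist y z.
Proof.
  destruct (dist_spec x z) as [[A ->]|[k [A [B ->]]]].
  - pose proof (dist_nonneg x y); pose proof (dist_nonneg y z); lra.
  - destruct (Rlt_or_le (dist x y) (hf k)) as [h1|h1];
    [destruct (Rlt_or_le (dist y z) (hf k)) as [h2|h2]|].
    + exfalso. apply dist_lt in h1, h2. apply B.
      rewrite (h1 k (le_n k)); apply h2; auto.
    + pose proof (dist_nonneg x y); lra.
    + pose proof (dist_nonneg y z); lra.
Qed.

Open Scope R_scope.

Section Main.
Variables (G : Type) (mul : G -> G -> G) (inv : G -> G) (e : G).
Hypothesis HG : is_group mul inv e.
Variables (X : Type) (op : (X -> Prop) -> Prop) (act : G -> X -> X).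
Hypothesis Hflow : is_flow mul e op act.
Hypothesis Hess : essentially_free e op act.
Variable f : nat -> G.
Hypothesis Hf : forall g, exists n, f n = g.

Let Ht := Ht G mul e X op act Hflow.
Let pRO := pre_RO G mul inv e HG X op act Hflow.
Let ppre := pre_pre G mul e X op act Hflow.
Let pe := pre_e G mul e X op act Hflow.

Lemma wit_exists g : exists c : nat -> (X -> Prop), (forall i, regular_open op (c i)) /\
  (g <> e -> (forall i, Dg G X act g (c i)) /\
     forall p, ro_ultrafilter op p -> exists i, p (c i)).
Proof.
  destruct (classic (g = e)) as [E|E].
  - exists (fun _ _ => True). split. intros; apply RO_True; auto. intro; contradiction.
  - destruct (witness3 G mul inv e HG X op act Hflow Hess g E)
      as [c1 [c2 [c3 [R1 [R2 [R3 [D1 [D2 [D3 Hc]]]]]]]]].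
    exists (fun i => match i with 0 => c1 | 1 => c2 | _ => c3 end). split; [|intros _; split].
    + intros [|[|i]]; auto.
    + intros [|[|i]]; auto.
    + intros p Hp. destruct (Hc p Hp) as [h|[h|h]]; [exists 0%nat|exists 1%nat|exists 2%nat]; auto.
Qed.

Definition cw (g : G) : nat -> (X -> Prop) := proj1_sig (constructive_indefinite_description _ (wit_exists g)).
Lemma cw_spec g : (forall i, regular_open op (cw g i)) /\
  (g <> e -> (forall i, Dg G X act g (cw g i)) /\
     forall p, ro_ultrafilter op p -> exists i, p (cw g i)).
Proof. unfold cw. destruct constructive_indefinite_description; auto. Qed.

Definition idx (g : G) : nat := proj1_sig (constructive_indefinite_description _ (Hf g)).
Lemma idx_spec g : f (idx g) = g.
Proof. unfold idx. destruct constructive_indefinite_description; auto. Qed.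

Definition enc (a k i : nat) : nat := to_nat (a, to_nat (k, i)).
Definition bb (n : nat) : X -> Prop :=
  let (a, r) := of_nat n in let (k, i) := of_nat r in pre act (f a) (cw (f k) i).
Definition mm (g : G) (n : nat) : nat :=
  let (a, r) := of_nat n in let (k, i) := of_nat r in enc (idx (mul (f a) g)) k i.

Lemma bb_enc a k i : bb (enc a k i) = pre act (f a) (cw (f k) i).
Proof. unfold bb, enc. rewrite !cancel_of_to. reflexivity. Qed.

Lemma bb_mm g n : bb (mm g n) = pre act g (bb n).
Proof.
  unfold mm, bb at 2. destruct (of_nat n) as [a r]. destruct (of_nat r) as [k i].
  rewrite bb_enc, idx_spec. rewrite ppre. reflexivity.
Qed.

Lemma bb_RO n : regular_open op (bb n).
Proof. unfold bb. destruct (of_nat n) as [a r]. destruct (of_nat r) as [k i].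
  apply pRO. apply cw_spec. Qed.

Definition inZ (z : nat -> Prop) := exists p : SG op, forall n, z n <-> proj1_sig p (bb n).
Definition Z := { z : nat -> Prop | inZ z }.

Lemma Zeq (z w : Z) : (forall n, proj1_sig z n <-> proj1_sig w n) -> z = w.
Proof.
  destruct z as [z hz], w as [w hw]; simpl; intro H.
  assert (z = w) as <- by (apply set_ext; auto).
  f_equal. apply proof_irrelevance.
Qed.

Definition piZ (p : SG op) : Z :=
  exist _ (fun n => proj1_sig p (bb n)) (ex_intro _ p (fun n => iff_refl _)).

Definition SGact (g : G) (p : SG op) : SG op :=
  exist _ (fun U => proj1_sig p (pre act g U))
    (SG_act_uf G mul inv e HG X op act Hflow _ g (proj2_sig p)).

Lemma actZ_ok g z : inZ z -> inZ (fun n => z (mm g n)).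
Proof.
  intros [p Hp]. exists (SGact g p). intro n. simpl. rewrite Hp, bb_mm. tauto.
Qed.

Definition actZ (g : G) (z : Z) : Z :=
  exist _ (fun n => proj1_sig z (mm g n)) (actZ_ok g _ (proj2_sig z)).

Definition dZ (z w : Z) : R := dist (proj1_sig z) (proj1_sig w).
Definition opZ (V : Z -> Prop) : Prop :=
  forall z, V z -> exists eps, 0 < eps /\ forall w, dZ z w < eps -> V w.

Lemma dZ_metric : is_metric dZ.
Proof.
  split; [|split; [|split]]; unfold dZ.
  - intros; apply dist_nonneg.
  - intros x y; split.
    + intro h. apply Zeq. apply dist_zero; auto.
    + intros ->. apply dist_zero. tauto.
  - intros; apply dist_sym.
  - intros; apply dist_tri.
Qed.

Lemma ball_open z r : opZ (fun w => dZ z w < r).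
Proof.
  intros u hu. exists (r - dZ z u). split; [lra|]. intros v hv.
  pose proof (dist_tri (proj1_sig z) (proj1_sig u) (proj1_sig v)). unfold dZ in *. lra.
Qed.

Lemma opZ_top : is_topology opZ.
Proof.
  split; [|split; [|split]].
  - intros z _. exists 1; split; [lra|auto].
  - intros z [].
  - intros U V oU oV z [Uz Vz].
    destruct (oU z Uz) as [e1 [p1 h1]], (oV z Vz) as [e2 [p2 h2]].
    exists (Rmin e1 e2). split. apply Rmin_pos; auto.
    intros w hw. split; [apply h1|apply h2].
    + pose proof (Rmin_l e1 e2); lra.
    + pose proof (Rmin_r e1 e2); lra.
  - intros F HF z [U [FU Uz]]. destruct (HF U FU z Uz) as [eps [pe' h]].
    exists eps; split; auto. intros w hw; exists U; auto.
Qed.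

Lemma opZ_haus : hausdorff opZ.
Proof.
  intros z w ne.
  assert (pos : 0 < dZ z w).
  { destruct (Rle_lt_or_eq_dec 0 (dZ z w)) as [h|h]; auto. apply dist_nonneg.
    exfalso. apply ne. apply Zeq. apply dist_zero. auto. }
  exists (fun u => dZ z u < dZ z w / 2), (fun u => dZ w u < dZ z w / 2).
  split; [apply ball_open|split; [apply ball_open|split; [|split]]].
  - unfold dZ in *; rewrite (proj2 (dist_zero _ _)); [lra|tauto].
  - unfold dZ in *; rewrite (proj2 (dist_zero _ _)); [lra|tauto].
  - intros u [h1 h2]. unfold dZ in *.
    pose proof (dist_tri (proj1_sig z) (proj1_sig u) (proj1_sig w)).
    rewrite (dist_sym (proj1_sig u)) in H. lra.
Qed.

Fixpoint Mx (g : G) (k : nat) : nat :=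
  match k with 0 => mm g 0 | S k' => Nat.max (Mx g k') (mm g (S k')) end.
Lemma Mx_spec g k j : (j <= k)%nat -> (mm g j <= Mx g k)%nat.
Proof.
  induction k; intro h; simpl.
  - assert (j = 0%nat) as -> by lia. lia.
  - destruct (Nat.eq_dec j (S k)) as [->|n]. lia. specialize (IHk ltac:(lia)). lia.
Qed.

Lemma actZ_cont g : continuous opZ opZ (actZ g).
Proof.
  intros V oV z Vz. destruct (oV _ Vz) as [eps [pe' h]].
  destruct (hf_small eps pe') as [k hk].
  exists (hf (Mx g k)). split. apply hf_pos. intros w hw. apply h.
  unfold dZ in *. assert (dist (proj1_sig (actZ g z)) (proj1_sig (actZ g w)) < hf k); [|lra].
  apply dist_lt. apply dist_lt in hw. intros j jk. simpl. apply hw. apply Mx_spec; auto.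
Qed.

Lemma actZ_e z : actZ e z = z.
Proof.
  apply Zeq. destruct z as [z [p Hp]]. simpl. intro n. rewrite !Hp, bb_mm, pe. tauto.
Qed.

Lemma actZ_mul g h z : actZ (mul g h) z = actZ g (actZ h z).
Proof.
  apply Zeq. destruct z as [z [p Hp]]. simpl. intro n.
  rewrite !Hp, !bb_mm, ppre. tauto.
Qed.

(* basic neighbourhoods in SG determining finitely many coordinates *)
Definition sel (p : SG op) (j : nat) : X -> Prop :=
  if excluded_middle_informative (proj1_sig p (bb j)) then bb j else ro_compl op (bb j).
Fixpoint Wk (p : SG op) (k : nat) : X -> Prop :=
  match k with 0 => sel p 0 | S k' => fun x => Wk p k' x /\ sel p (S k') x end.

Lemma sel_RO p j : regular_open op (sel p j).
Proof. unfold sel; destruct excluded_middle_informative. apply bb_RO.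
  apply ro_compl_RO; auto. apply (RO_open X op), bb_RO. Qed.
Lemma sel_in p j : proj1_sig p (sel p j).
Proof. destruct p as [p Hp]. unfold sel; simpl; destruct excluded_middle_informative; auto.
  apply (uf_compl X op p Hp); auto. apply bb_RO. Qed.
Lemma Wk_RO p k : regular_open op (Wk p k).
Proof. induction k; simpl. apply sel_RO. apply RO_inter; auto. apply sel_RO. Qed.
Lemma Wk_in p k : proj1_sig p (Wk p k).
Proof. destruct p as [p Hp]. induction k; simpl. apply (sel_in (exist _ p Hp)).
  apply (uf_and X op p Hp); auto. apply (sel_in (exist _ p Hp)). Qed.
Lemma Wk_sub p k j : (j <= k)%nat -> sub (Wk p k) (sel p j).
Proof.
  induction k; intros h x hx; simpl in hx.
  - assert (j = 0%nat) as -> by lia. auto.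
  - destruct (Nat.eq_dec j (S k)) as [->|n]. apply hx. apply IHk. lia. apply hx.
Qed.
Lemma Wk_agree p q k : proj1_sig q (Wk p k) -> agree k (proj1_sig (piZ p)) (proj1_sig (piZ q)).
Proof.
  intros h j jk. simpl. destruct q as [q Hq]; simpl in *.
  assert (qs : q (sel p j)).
  { apply (uf_up X op q Hq _ _ h). apply sel_RO. apply Wk_sub; auto. }
  unfold sel in qs. destruct excluded_middle_informative as [a|a]; split; intro c; auto.
  - contradiction.
  - exfalso. apply (uf_not_both X op q Hq _ c qs).
Qed.

Lemma piZ_cont : continuous (SG_open (op := op)) opZ piZ.
Proof.
  intros V oV p Vp. destruct (oV _ Vp) as [eps [pe' h]].
  destruct (hf_small eps pe') as [k hk].
  exists (Wk p k). split; [apply Wk_RO|split; [apply Wk_in|]].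
  intros q hq. apply h. unfold dZ. assert (dist (proj1_sig (piZ p)) (proj1_sig (piZ q)) < hf k); [|lra].
  apply dist_lt. apply Wk_agree; auto.
Qed.

Lemma piZ_surj z : exists p, piZ p = z.
Proof.
  destruct z as [z [p Hp]]. exists p. apply Zeq. simpl. intro n. rewrite Hp. tauto.
Qed.

Lemma piZ_equiv g p q : SG_act_rel act g p q -> piZ q = actZ g (piZ p).
Proof.
  intro H. apply Zeq. simpl. intro n. rewrite (H (bb n)), bb_mm. tauto.
Qed.

Lemma list_choice (A B : Type) (Pr : A -> B -> Prop) (l : list A) :
  (forall a, In a l -> exists b, Pr a b) ->
  exists lb : list B, (forall b, In b lb -> exists a, In a l /\ Pr a b) /\
     (forall a, In a l -> exists b, In b lb /\ Pr a b).
Proof.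
  induction l as [|a l IH]; intro H.
  - exists nil; split; intros _ [].
  - destruct (H a (or_introl eq_refl)) as [b Hb].
    destruct IH as [lb [h1 h2]]. intros a' h; apply H; right; auto.
    exists (b :: lb). split.
    + intros b' [<-|h]. exists a; split; auto. left; auto.
      destruct (h1 b' h) as [a' [i p]]. exists a'; split; auto. right; auto.
    + intros a' [<-|h]. exists b; split; auto. left; auto.
      destruct (h2 a' h) as [b' [i p]]. exists b'; split; auto. right; auto.
Qed.

Lemma Z_compact : compact opZ.
Proof.
  intros F HF Hcov.
  pose (F' := fun O : SG op -> Prop => exists V, F V /\ O = fun p => V (piZ p)).
  destruct (SG_compact X op Ht F') as [l [lF lc]].
  - intros O [V [FV ->]]. apply piZ_cont; auto.
  - intro p. destruct (Hcov (piZ p)) as [V [FV Vp]]. exists (fun p => V (piZ p)).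
    split; auto. exists V; auto.
  - destruct (list_choice _ _ (fun O V => F V /\ O = fun p => V (piZ p)) l) as [lb [h1 h2]].
    { intros O i. apply lF; auto. }
    exists lb. split.
    + intros V i. destruct (h1 V i) as [_ [_ [FV _]]]; auto.
    + intro z. destruct (piZ_surj z) as [p <-]. destruct (lc p) as [O [i Op]].
      destruct (h2 O i) as [V [iV [_ ->]]]. exists V; auto.
Qed.

Lemma actZ_free : free_flow e actZ.
Proof.
  intros g z E. apply NNPP; intro ne.
  assert (Ef : forall n, proj1_sig z (mm g n) <-> proj1_sig z n).
  { intro n. assert (h := f_equal (fun u => proj1_sig u n) E). simpl in h. rewrite h; tauto. }
  clear E. destruct z as [z [p Hp]]. simpl in Ef.
  destruct (cw_spec g) as [_ Hw]. destruct (Hw ne) as [D Hc].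
  destruct (Hc _ (proj2_sig p)) as [i pi].
  pose (n := enc (idx e) (idx g) i).
  assert (bn : bb n = cw g i) by (unfold n; rewrite bb_enc, !idx_spec, pe; reflexivity).
  assert (z n) by (rewrite Hp, bn; auto).
  assert (h2 : proj1_sig p (pre act g (cw g i))).
  { rewrite <- bn, <- bb_mm, <- Hp. apply Ef; auto. }
  destruct p as [p' Hp']. simpl in *.
  apply (uf_empty X op p' Hp' _ (uf_and X op p' Hp' _ _ pi h2)).
  intros x [a b]. apply (D i x); auto.
Qed.

End Main.


Close Scope R_scope.
Theorem proposition8p3
  (G : Type) (mul : G -> G -> G) (inv : G -> G) (e : G)
  (HG : is_group mul inv e)
  (X : Type) (op : (X -> Prop) -> Prop) (act : G -> X -> X)
  (Hflow : is_flow mul e op act)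
  (Hmin : minimal_flow op act)
  (Hess : essentially_free e op act) :
  SG_free e op act /\
  (countable_type G ->
    exists (Z : Type) (opZ : (Z -> Prop) -> Prop) (actZ : G -> Z -> Z),
      SG_factor mul inv e op act opZ actZ /\ metrizable opZ /\ free_flow e actZ).
Proof.
  split.
  - exact (SG_free_thm G mul inv e HG X op act Hflow Hess).
  - intros [f Hf].
    exists (Z G mul inv e HG X op act Hflow Hess f),
      (opZ G mul inv e HG X op act Hflow Hess f),
      (actZ G mul inv e HG X op act Hflow Hess f Hf).
    split; [|split].
    + split.
      * split; [apply opZ_top|split; [apply Z_compact|split; [apply opZ_haus|split]]].
        -- apply actZ_cont.
        -- split; [apply actZ_e|apply actZ_mul].
      * exists (piZ G mul inv e HG X op act Hflow Hess f).
        split; [apply piZ_cont|split; [apply piZ_surj|apply piZ_equiv]].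
    + exists (dZ G mul inv e HG X op act Hflow Hess f). split.
      * apply dZ_metric.
      * intro V. unfold opZ. tauto.
    + apply actZ_free.
Qed.
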